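(* Let $0\le a<b$ and $1<\alpha\le 2$. Define $G:[a,b]\times[a,b]\to\mathbb{R}$ by $$G(t,s)=\begin{cases}\dfrac{b-t}{b-a}\big[(\alpha-1)(s-a)-2+\alpha\big], & a\le s\le t\le b,\\[2mm] \dfrac{t-a}{b-a}\big[(\alpha-1)(b-s)+2-\alpha\big], & a\le t\le s\le b.\end{cases}$$ Then: (i) if $b-a<\frac{2-\alpha}{\alpha-1}$, then $\displaystyle\max_{(t,s)\in[a,b]\times[a,b]}|G(t,s)|=2-\alpha$; (ii) if $b-a\ge\frac{2-\alpha}{\alpha-1}$, then $\displaystyle\max_{(t,s)\in[a,b]\times[a,b]}|G(t,s)|=\frac{[(\alpha-1)(b-a)+(2-\alpha)]^2}{4(\alpha-1)(b-a)}$.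
   Context: The function $G$ is the Green's function of the boundary value problem ${}^{CF}D_a^{\alpha}u(t)+q(t)u(t)=0$, $a<t<b$, $u(a)=u(b)=0$, with the Caputo–Fabrizio derivative of order $\alpha$; the statement itself only concerns the explicitly defined function $G$. *)

(* Defs.v *)
From Stdlib Require Import Reals.
Open Scope R_scope.

(* Green's function of the Caputo-Fabrizio BVP. On the diagonal s = t the two
   formulas of the paper differ (by 2 - alpha); we use the second one
   (case a <= t <= s <= b) there. *)
Definition G (a b alpha t s : R) : R :=
  if Rle_dec t s
  then (t - a) / (b - a) * ((alpha - 1) * (b - s) + 2 - alpha)
  else (b - t) / (b - a) * ((alpha - 1) * (s - a) - 2 + alpha).

Definition is_max_absG (a b alpha M : R) : Prop :=
  (exists t s, a <= t <= b /\ a <= s <= b /\ Rabs (G a b alpha t s) = M) /\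
  (forall t s, a <= t <= b -> a <= s <= b -> Rabs (G a b alpha t s) <= M).

(* Main.v *)
Require Import Defs.
From Stdlib Require Import Reals Lra Psatz.
Open Scope R_scope.

Lemma div_bounds (X L M : R) : 0 < L -> - (L*M) <= X <= L*M -> Rabs (X / L) <= M.
Proof.
  intros HL [H1 H2]. apply Rabs_le.
  assert (E: X / L * L = X) by (field; lra).
  split.
  - apply Rmult_le_reg_r with L; [lra|]. rewrite E. lra.
  - apply Rmult_le_reg_r with L; [lra|]. rewrite E. lra.
Qed.

Lemma absG_le (a b alpha M : R) (Hab : a < b) (Hal1 : 1 < alpha) (Hal2 : alpha <= 2)
  (HM : 2 - alpha <= M)
  (Hf : forall x, a <= x <= b -> (x - a) * ((alpha - 1) * (b - x) + 2 - alpha) <= (b - a) * M) :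
  forall t s, a <= t <= b -> a <= s <= b -> Rabs (G a b alpha t s) <= M.
Proof.
  intros t s Ht Hs. unfold G. destruct (Rle_dec t s) as [Hts|Hts].
  - replace ((t - a) / (b - a) * ((alpha - 1) * (b - s) + 2 - alpha))
      with ((t - a) * ((alpha - 1) * (b - s) + 2 - alpha) / (b - a)) by (field; lra).
    apply div_bounds; [lra|].
    assert (0 <= (t-a)*((alpha-1)*(s-t))) by (apply Rmult_le_pos; nra).
    assert (0 <= (t-a)*((alpha-1)*(b-s)+2-alpha)) by (apply Rmult_le_pos; nra).
    specialize (Hf t Ht). nra.
  - replace ((b - t) / (b - a) * ((alpha - 1) * (s - a) - 2 + alpha))
      with ((b - t) * ((alpha - 1) * (s - a) - 2 + alpha) / (b - a)) by (field; lra).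
    apply div_bounds; [lra|].
    assert (0 <= (b-t)*((alpha-1)*(t-s))) by (apply Rmult_le_pos; nra).
    assert (0 <= (b-t)*((alpha-1)*(s-a))) by (apply Rmult_le_pos; nra).
    assert (0 <= (b-t)*(2-alpha)) by nra.
    assert (0 <= (t-a)*(2-alpha)) by nra.
    assert (0 <= (b-a)*(M - (2-alpha))) by nra.
    specialize (Hf (a + (b - t)) ltac:(lra)).
    replace (a + (b - t) - a) with (b - t) in Hf by ring.
    replace (b - (a + (b - t))) with (t - a) in Hf by ring.
    nra.
Qed.

Theorem proposition1 (a b alpha : R)
  (Ha : 0 <= a) (Hab : a < b) (Hal1 : 1 < alpha) (Hal2 : alpha <= 2) :
  (b - a < (2 - alpha) / (alpha - 1) ->
     is_max_absG a b alpha (2 - alpha)) /\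
  (b - a >= (2 - alpha) / (alpha - 1) ->
     is_max_absG a b alpha
       (((alpha - 1) * (b - a) + (2 - alpha)) ^ 2 / (4 * (alpha - 1) * (b - a)))).
Proof.
  split; intro HL.
  - assert (HL' : (b - a) * (alpha - 1) < 2 - alpha).
    { apply Rmult_lt_reg_r with (/ (alpha - 1)).
      - apply Rinv_0_lt_compat; lra.
      - replace ((b - a) * (alpha - 1) * / (alpha - 1)) with (b - a) by (field; lra).
        exact HL. }
    split.
    + exists b, b. split; [lra|]. split; [lra|].
      unfold G. destruct (Rle_dec b b) as [_|n]; [|lra].
      replace ((b - a) / (b - a) * ((alpha - 1) * (b - b) + 2 - alpha)) with (2 - alpha)
        by (field; lra).
      apply Rabs_pos_eq; lra.
    + apply absG_le; try lra.
      intros x Hx.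
      assert (0 <= (b - x) * ((2 - alpha) - (alpha - 1) * (x - a))).
      { apply Rmult_le_pos; nra. }
      nra.
  - assert (HL' : 2 - alpha <= (b - a) * (alpha - 1)).
    { apply Rmult_le_reg_r with (/ (alpha - 1)).
      - apply Rinv_0_lt_compat; lra.
      - replace ((b - a) * (alpha - 1) * / (alpha - 1)) with (b - a) by (field; lra).
        lra. }
    set (c := alpha - 1) in *. set (L := b - a) in *.
    set (M := (c * L + (2 - alpha)) ^ 2 / (4 * c * L)).
    assert (HcL : 0 < c * L) by (unfold c, L; nra).
    assert (HLM : L * M = (c * L + (2 - alpha)) ^ 2 / (4 * c)).
    { unfold M. field. unfold c, L; split; lra. }
    split.
    + set (x0 := (c * L + (2 - alpha)) / (2 * c)).
      exists (a + x0), (a + x0).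
      assert (Hx0 : 0 <= x0 <= L).
      { unfold x0. split.
        - apply Rle_mult_inv_pos; unfold c in *; lra.
        - apply Rmult_le_reg_r with (2 * c); [unfold c; lra|].
          replace ((c * L + (2 - alpha)) / (2 * c) * (2 * c)) with (c * L + (2 - alpha))
            by (field; unfold c; lra). lra. }
      split; [unfold L in *; lra|]. split; [unfold L in *; lra|].
      unfold G. destruct (Rle_dec (a + x0) (a + x0)) as [_|n]; [|lra].
      fold L. replace (b - (a + x0)) with (L - x0) by (unfold L; ring).
      replace (a + x0 - a) with x0 by ring.
      fold c.
      rewrite Rabs_pos_eq.
      * unfold M, x0. field. unfold c, L; split; lra.
      * apply Rmult_le_pos.
        -- apply Rle_mult_inv_pos; unfold L; lra.
        -- unfold c in *; nra.
    + apply absG_le; try lra.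
      * apply Rmult_le_reg_l with L; [unfold L; lra|].
        rewrite HLM.
        apply Rmult_le_reg_r with (4 * c); [unfold c; lra|].
        replace ((c * L + (2 - alpha)) ^ 2 / (4 * c) * (4 * c)) with ((c * L + (2 - alpha)) ^ 2)
          by (field; unfold c; lra).
        assert (0 <= 2 - alpha) by lra.
        nra.
      * intros x Hx. fold c L. rewrite HLM.
        apply Rmult_le_reg_r with (4 * c); [unfold c; lra|].
        replace ((c * L + (2 - alpha)) ^ 2 / (4 * c) * (4 * c)) with ((c * L + (2 - alpha)) ^ 2)
          by (field; unfold c; lra).
        assert (0 <= (2 * c * (x - a) - (c * L + (2 - alpha)))^2) by apply pow2_ge_0.
        unfold L in *. nra.
Qed.
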